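(* Let $G$ be a countable infinite discrete group and $\alpha: G\curvearrowright X$ a continuous action on an infinite compact Hausdorff space $X$ with weak paradoxical comparison. Let $F\subset X$ be closed and $O\subset X$ open, and suppose that for every closed $G$-invariant subset $Y\subset X$, $F\cap Y\neq\emptyset$ implies $O\cap Y\neq\emptyset$. Then $F\prec O$.
   Context: Subequivalence: for closed $F$ and open $O$, $F\prec O$ if there exist a finite open cover $\mathcal{U}$ of $F$ and $s_U\in G$ with the sets $s_UU$ pairwise disjoint subsets of $O$. Weak paradoxical comparison: for every closed $F$ and nonempty open $O$ with $F\subset G\cdot O=\bigcup_{g\in G}gO$, one has $F\prec O$. *)

(* Defs.v *)
From HB Require Import structures.
From mathcomp Require Import all_boot all_order all_algebra.
From mathcomp Require Import all_classical all_reals all_analysis.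
Set Implicit Arguments. Unset Strict Implicit. Unset Printing Implicit Defensive.
Local Open Scope classical_set_scope.

Definition is_group (G : Type) (mul : G -> G -> G) (e : G) (inv : G -> G) : Prop :=
  [/\ forall a b c, mul a (mul b c) = mul (mul a b) c,
      forall a, mul e a = a,
      forall a, mul a e = a,
      forall a, mul (inv a) a = e &
      forall a, mul a (inv a) = e].

(* A continuous action of the discrete group G on the space X:
   act e = id, act (g h) = act g o act h, and each act g continuous
   (for discrete G this is joint continuity of G x X -> X). *)
Definition is_cont_action (G : Type) (X : topologicalType)
  (mul : G -> G -> G) (e : G) (act : G -> X -> X) : Prop :=
  [/\ forall x, act e x = x,
      forall g h x, act (mul g h) x = act g (act h x) &
      forall g, continuous (act g)].

Definition subequiv (G : Type) (X : topologicalType) (act : G -> X -> X)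
  (F O : set X) : Prop :=
  exists (n : nat) (U : 'I_n -> set X) (s : 'I_n -> G),
    [/\ forall i, open (U i),
        F `<=` \bigcup_(i in [set: 'I_n]) U i,
        forall i, act (s i) @` U i `<=` O &
        forall i j, i <> j -> act (s i) @` U i `&` act (s j) @` U j = set0].

Definition orbit_set (G : Type) (X : Type) (act : G -> X -> X) (O : set X) : set X :=
  \bigcup_(g in [set: G]) act g @` O.

Definition weak_paradoxical_comparison (G : Type) (X : topologicalType)
  (act : G -> X -> X) : Prop :=
  forall F O : set X, closed F -> open O -> O !=set0 ->
    F `<=` orbit_set act O -> subequiv act F O.

Definition invariant_set (G : Type) (X : Type) (act : G -> X -> X) (Y : set X) : Prop :=
  forall g, act g @` Y `<=` Y.

(* Main.v *)
Require Import Defs.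
From HB Require Import structures.
From mathcomp Require Import all_boot all_order all_algebra.
From mathcomp Require Import all_classical all_reals all_analysis.
Local Open Scope classical_set_scope.

Theorem lemma4p10 (G : Type) (mul : G -> G -> G) (e : G) (inv : G -> G)
  (X : topologicalType) (act : G -> X -> X) :
  is_group mul e inv ->
  countable [set: G] -> ~ finite_set [set: G] ->
  compact [set: X] -> hausdorff_space X -> ~ finite_set [set: X] ->
  is_cont_action mul e act ->
  weak_paradoxical_comparison act ->
  forall F O : set X, closed F -> open O ->
  (forall Y : set X, closed Y -> invariant_set act Y ->
     F `&` Y !=set0 -> O `&` Y !=set0) ->
  subequiv act F O.
Proof.
move=> [mA m1 m1r mV mVr] _ _ _ _ _ [a1 aM ac] wpc F O cF oO H.
have actK : forall g x, act (inv g) (act g x) = x.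
  by move=> g x; rewrite -aM mV a1.
have actKV : forall g x, act g (act (inv g) x) = x.
  by move=> g x; rewrite -aM mVr a1.
have oGO : open (orbit_set act O).
  apply: bigcup_open => g _.
  have -> : act g @` O = act (inv g) @^-1` O.
    rewrite eqEsubset; split => y.
      by move=> [z Oz <-]; rewrite /preimage /= actK.
    by move=> Oy; exists (act (inv g) y) => //; rewrite actKV.
  by apply: open_comp => [x _|//]; apply: ac.
have FGO : F `<=` orbit_set act O.
  move=> x Fx; apply: contrapT => nx.
  have [y [Oy Zy]] : O `&` ~` orbit_set act O !=set0.
    apply: H.
  - exact: open_closedC.
  - move=> g y0 [y Zy <-] [h _ [z Oz ho]]; apply: Zy.
    exists (mul (inv g) h) => //; exists z => //.
    by rewrite aM ho actK.
  - by exists x.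
  by apply: Zy; exists e => //; exists y => //; rewrite a1.
have [hO|nO0] := pselect (O !=set0).
  exact: wpc.
exists 0%N, (fun _ => set0), (fun _ => e); split.
- by move=> [m hm]; exfalso; rewrite ltn0 in hm.
- move=> x /FGO [g _ [z Oz _]]; exfalso; apply: nO0; by exists z.
- by move=> [m hm]; exfalso; rewrite ltn0 in hm.
- by move=> [m hm]; exfalso; rewrite ltn0 in hm.
Qed.
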